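(* Let $F$ be a field of finite characteristic $p$ and let $n \in \mathbb{N}$ with $p \nmid n$. Then the polynomial $x^n + y^n + x^n y^n$ is irreducible in the polynomial ring $F[x,y]$. *)

(* Defs.v *)
(* F[x,y] is modelled as {poly {poly F}}:
   the inner variable is x (embedded as 'X%:P), the outer one is y ('X). *)
From mathcomp Require Import all_boot all_order all_algebra.
Set Implicit Arguments. Unset Strict Implicit. Unset Printing Implicit Defensive.
Import GRing.Theory.
Local Open Scope ring_scope.

Definition irreducible_elt (R : idomainType) (f : R) : Prop :=
  [/\ f != 0, f \isn't a GRing.unit &
      forall a b : R, f = a * b -> a \is a GRing.unit \/ b \is a GRing.unit].

Definition bvarx (F : fieldType) : {poly {poly F}} := ('X)%:P.
Definition bvary (F : fieldType) : {poly {poly F}} := 'X.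

(* Main.v *)
Require Import Defs.
From mathcomp Require Import all_boot all_order all_algebra.
Set Warnings "-notation-overridden,-ambiguous-paths,-deprecated".
From mathcomp Require Import qfpoly ring zify.
From Stdlib Require Import Classical.
Import GRing.Theory.
Local Open Scope ring_scope.
Import Pdiv.Field.
Lemma in_qpoly_eq0 (F : fieldType) (q : {poly F}) (hI : monic_irreducible_poly q) p :
  (in_qpoly q p == 0 :> {poly %/ q with hI}) = (q %| p).
Proof.
rewrite -val_eqE /= (mk_monicE hI) dvdpE //.
Qed.
Definition fpol (F : fieldType) n : {poly {poly F}} :=
  ('X^n + 1)%:P * 'X^n + ('X^n)%:P.

Lemma coef_fpol (F : fieldType) n i : (0 < n)%N ->
  (fpol F n)`_i = (if i == n then 'X^n + 1 else 0) + (if i == 0%N then 'X^n else 0).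
Proof.
move=> n0; rewrite /fpol coefD coefCM coefXn coefC; case: (i == n); 
by rewrite ?mulr1 ?mulr0.
Qed.

Lemma size_fpol (F : fieldType) n : (0 < n)%N -> size (fpol F n) = n.+1.
Proof.
move=> n0; have c0 : ('X^n + 1 : {poly F}) != 0 by rewrite -size_poly_eq0 -polyC1 size_XnaddC.
 rewrite /fpol size_polyDl mul_polyC ?size_scale ?size_polyXn //.
by rewrite size_polyC; case: (_ != 0).
Qed.

Lemma const_unit (F : fieldType) n (a b : {poly {poly F}}) : (0 < n)%N ->
  fpol F n = a * b -> size a = 1%N -> a \is a GRing.unit.
Proof.
move=> n0 hf sa.
have ha := size1_polyC (eq_leq sa).
set a0 := a`_0 in ha.
have e0 := congr1 (fun p : {poly {poly F}} => p`_0) hf.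
have en := congr1 (fun p : {poly {poly F}} => p`_n) hf.
rewrite /= coef_fpol // ha coefCM in e0.
rewrite /= coef_fpol // ha coefCM in en.
have nn : (0 == n)%N = false by apply/negbTE; rewrite eq_sym -lt0n.
rewrite nn eqxx add0r in e0.
rewrite eqxx (eq_sym n) nn addr0 in en.
have d1 : a0 %| 'X^n by rewrite e0 dvdp_mulIl.
have d2 : a0 %| 'X^n + 1 by rewrite en dvdp_mulIl.
have : a0 %| ('X^n + 1) - 'X^n by apply: dvdp_sub.
rewrite addrC addKr dvdp1 => /eqP s1.
have a0n0 : a0 != 0 by rewrite -size_poly_eq0 s1.
rewrite ha poly_unitE size_polyC a0n0 coefC eqxx /=.
rewrite poly_unitE s1 eqxx /= unitfE.
have : lead_coef a0 != 0 by rewrite lead_coef_eq0.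
by rewrite lead_coefE s1.
Qed.

Section T.
Variables (F : fieldType) (q : {poly F}) (hI : monic_irreducible_poly q).
Definition K := {poly %/ q with hI}.
Definition phi : {poly F} -> K := in_qpoly q.

Lemma main_irr n (a b : {poly {poly F}}) : (0 < n)%N ->
  q %| 'X^n + 1 -> ~~ (q %| 'X^n) -> ~~ (q * q %| 'X^n + 1) ->
  fpol F n = a * b -> a \is a GRing.unit \/ b \is a GRing.unit.
Proof.
move=> n0 hqc hqx hq2 hf.
have phic : phi ('X^n + 1) = 0 by apply/eqP; rewrite /phi in_qpoly_eq0.
have phix : phi ('X^n) != 0 by rewrite /phi in_qpoly_eq0.
have hm : map_poly phi a * map_poly phi b = (phi 'X^n)%:P.
  rewrite -rmorphM -hf /fpol rmorphD rmorphM /= !map_polyC /= map_polyXn.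
  rewrite -[in_qpoly q (_ + _)]/(phi (_ + _)) phic.
  by rewrite polyC0 mul0r add0r.
have fn0 : fpol F n != 0 by rewrite -size_poly_eq0 size_fpol.
have an0 : a != 0 by apply: contraNneq fn0 => a0; rewrite hf a0 mul0r.
have bn0 : b != 0 by apply: contraNneq fn0 => b0; rewrite hf b0 mulr0.
have an0' : map_poly phi a != 0.
  by apply: contraNneq phix => a0; move: hm; rewrite a0 mul0r => /esym/eqP; rewrite polyC_eq0 => ->.
have bn0' : map_poly phi b != 0.
  by apply: contraNneq phix => b0; move: hm; rewrite b0 mulr0 => /esym/eqP; rewrite polyC_eq0 => ->.
have s1 : (size (map_poly phi a) + size (map_poly phi b)).-1 = 1%N.
  by rewrite -size_mul // hm size_polyC phix.
have sa1 : size (map_poly phi a) = 1%N.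
  by move: s1 an0' bn0'; rewrite -!size_poly_gt0; lia.
have sb1 : size (map_poly phi b) = 1%N.
  by move: s1 an0' bn0'; rewrite -!size_poly_gt0; lia.
have dva i : (0 < i)%N -> q %| a`_i.
  move=> i0; rewrite -(@in_qpoly_eq0 F q hI) -/(phi _).
  have -> : phi a`_i = (map_poly phi a)`_i by rewrite coef_map.
  by rewrite nth_default // sa1.
have dvb i : (0 < i)%N -> q %| b`_i.
  move=> i0; rewrite -(@in_qpoly_eq0 F q hI) -/(phi _).
  have -> : phi b`_i = (map_poly phi b)`_i by rewrite coef_map.
  by rewrite nth_default // sb1.
have sf : (size a + size b).-1 = n.+1 by rewrite -size_mul // -hf size_fpol.
have sa0 : (0 < size a)%N by rewrite size_poly_gt0.
have sb0 : (0 < size b)%N by rewrite size_poly_gt0.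
case: (ltnP 1 (size a)) => ha; case: (ltnP 1 (size b)) => hb.
- exfalso; move/negP: hq2; apply.
  have -> : 'X^n + 1 = lead_coef (fpol F n).
    rewrite lead_coefE size_fpol //= coef_fpol // eqxx.
    have -> : (n == 0)%N = false by apply/negbTE; rewrite -lt0n.
    by rewrite addr0.
  rewrite hf lead_coefM !lead_coefE; apply: dvdp_mul; [apply: dva | apply: dvb].
  by case: (size a) ha => [|[|m]].
  by case: (size b) hb => [|[|m]].
- right; apply: (@const_unit F n b a) => //; first by rewrite mulrC.
  lia.
- left; apply: (@const_unit F n a b) => //; lia.
- left; apply: (@const_unit F n a b) => //; lia.
Qed.
End T.
Lemma irr_factor (F : fieldType) (c : {poly F}) :
  (1 < size c)%N -> exists q : {poly F}, [/\ irreducible_poly q, q \is monic & q %| c].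
Proof.
elim: {c}(size c).+1 {-2}c (ltnSn (size c)) => // m IH c Hm Hc.
case: (classic (forall d : {poly F}, size d != 1 -> d %| c -> d %= c)) => [H|H].
  have cn0 : c != 0 by rewrite -size_poly_gt0 (ltn_trans _ Hc).
  have lcn0 : lead_coef c != 0 by rewrite lead_coef_eq0.
  exists ((lead_coef c)^-1 *: c); split.
  - split; first by rewrite size_scale ?invr_eq0.
    move=> d Hd; rewrite dvdpZr ?invr_eq0 // => /(H _ Hd) Hdc.
    by apply: (eqp_trans Hdc); rewrite eqp_sym eqp_scale ?invr_eq0.
  - by rewrite monicE lead_coefZ mulVf.
  - by rewrite dvdpZl ?invr_eq0.
have [d Hd] := not_all_ex_not _ _ H.
have [Hd1 Hd2] := imply_to_and _ _ Hd.
have [Hdc Hdeq] := imply_to_and _ _ Hd2.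
have cn0 : c != 0 by rewrite -size_poly_gt0 (ltn_trans _ Hc).
have dn0 : d != 0 by apply: contraNneq cn0 => d0; move: Hdc; rewrite d0 dvd0p.
have sd : (size d < size c)%N.
  rewrite ltn_neqAle dvdp_leq // andbT; apply/negP => /eqP.
  by move/eqP; rewrite (dvdp_size_eqp Hdc) => /Hdeq.
have sd1 : (1 < size d)%N.
  by move: Hd1 dn0; rewrite -size_poly_gt0; case: (size d) => [|[|]].
have [q [q1 q2 q3]] := IH d (leq_trans sd Hm) sd1.
by exists q; split => //; apply: dvdp_trans q3 Hdc.
Qed.
Lemma q_props (F : fieldType) (n : nat) (q : {poly F}) :
  (0 < n)%N -> n%:R != 0 :> F -> irreducible_poly q -> q %| 'X^n + 1 ->
  ~~ (q %| 'X^n) /\ ~~ (q * q %| 'X^n + 1).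
Proof.
move=> n0 nF [q1 _] qc.
have qX : ~~ (q %| 'X^n).
  apply/negP => qX; have : q %| ('X^n + 1) - 'X^n by apply: dvdp_sub.
  by rewrite addrC addKr dvdp1; move: q1; case: (size q) => [|[|]].
split=> //; apply/negP => /dvdpP [r hr].
have : q %| ('X^n + 1)^`().
  rewrite hr !derivM; apply: dvdp_add; first by apply: dvdp_mull; apply: dvdp_mulIl.
  by apply: dvdp_mull; apply: dvdp_add; [apply: dvdp_mulIr| apply: dvdp_mulIl].
rewrite derivD derivXn -polyC1 derivC addr0 -scaler_nat dvdpZr // => h.
move: qX; rewrite -(prednK n0) exprS mulrC.
by rewrite (dvdp_mulr _ h).
Qed.

Theorem lemma4p1 (F : fieldType) (p n : nat) (hp : p \in [pchar F])
  (hpn : ~~ (p %| n)%N) :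
  irreducible_elt ((bvarx F) ^+ n + (bvary F) ^+ n
                   + (bvarx F) ^+ n * (bvary F) ^+ n).
Proof.
have n0 : (0 < n)%N by rewrite lt0n; apply: contraNneq hpn => ->; exact: dvdn0.
have nF : n%:R != 0 :> F by rewrite -(dvdn_pcharf hp).
have ef : bvarx F ^+ n + bvary F ^+ n + bvarx F ^+ n * bvary F ^+ n = fpol F n.
  rewrite /bvarx /bvary /fpol -rmorphXn rmorphD rmorph1 /=.
  rewrite mulrDl mul1r.
  by ring.
rewrite ef.
have sc : (1 < size ('X^n + 1 : {poly F})%R)%N by rewrite -polyC1 size_XnaddC.
have [q [qi qm qc]] := @irr_factor F _ sc.
have [qx q2] := @q_props F n q n0 nF qi qc.
have hI : monic_irreducible_poly q by split.
split.
- by rewrite -size_poly_eq0 size_fpol.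
- rewrite poly_unitE size_fpol //= eqSS.
  by have -> : (n == 0)%N = false by apply/negbTE; rewrite -lt0n.
- move=> a b hf; have := @main_irr F q hI n a b n0 qc qx q2 hf; by [].
Qed.
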